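(* Let $G=(V,E)$ be a finite simple undirected graph with $n=|V|$ and let $0<p<1$. Let $S_0=V$ and, for $i=1,\dots,n$, let $S_i=S_{i-1}\setminus\{\ell_i\}$ where $\ell_i\in S_{i-1}$ is any vertex with $d_{\ell_i}(S_{i-1})=\min_{u\in S_{i-1}}d_u(S_{i-1})$ (the standard peeling algorithm, ties broken arbitrarily). Let $S'$ be a set among $S_0,S_1,\dots,S_n$ maximizing $f_p$. Then $2\,f_p(S')\ge \max_{T\subseteq V}f_p(T)$, and equivalently $2^{1/p}M_p(S')\ge\max_{T\subseteq V}M_p(T)$.
   Context: For $v\in V$, $N(v)=\{u\in V:(u,v)\in E\}$ (so $v\notin N(v)$). For $S\subseteq V$ and $v\in V$, $d_v(S)=|N(v)\cap S|$. For $p>0$ and nonempty $S\subseteq V$, $f_p(S)=\frac{1}{|S|}\sum_{v\in S}d_v(S)^p$ (with the convention $0^p=0$), $f_p(\emptyset)=0$, and the $p$-density is $M_p(S)=f_p(S)^{1/p}$. *)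

(* Defs.v *)
From HB Require Import structures.
From mathcomp Require Import all_boot all_order all_algebra.
From mathcomp Require Import all_classical all_reals all_analysis.
Set Implicit Arguments. Unset Strict Implicit. Unset Printing Implicit Defensive.
Import Order.TTheory GRing.Theory Num.Theory.
Local Open Scope ring_scope.

Definition deg (V : finType) (e : rel V) (S : {set V}) (v : V) : nat :=
  #|[set u in S | e u v]|.

Definition rpow (R : realType) (x p : R) : R :=
  if x == 0 then 0 else x `^ p.

Definition fp (R : realType) (V : finType) (e : rel V) (p : R) (S : {set V}) : R :=
  if S == finset.set0 then 0
  else (#|S|%:R)^-1 * \sum_(v in S) rpow ((deg e S v)%:R) p.

Definition Mp (R : realType) (V : finType) (e : rel V) (p : R) (S : {set V}) : R :=
  rpow (fp e p S) p^-1.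

Definition peeling (V : finType) (e : rel V) (S : nat -> {set V}) (l : nat -> V) : Prop :=
  S 0%N = [set: V] /\
  forall i : nat, (1 <= i <= #|V|)%N ->
    [/\ l i \in S i.-1,
        (forall u, u \in S i.-1 -> (deg e (S i.-1) (l i) <= deg e (S i.-1) u)%N)
      & S i = S i.-1 :\ l i].

(* Main.v *)
Require Import Defs.
From HB Require Import structures.
From mathcomp Require Import all_boot all_order all_algebra.
From mathcomp Require Import all_classical all_reals all_analysis.
From mathcomp Require Import ring lra zify.
Import Order.TTheory GRing.Theory Num.Theory.
Local Open Scope ring_scope.

Lemma young_p (R : realType) (p y : R) : 0 < p -> p < 1 -> 0 <= y ->
  y `^ p <= p * y + (1 - p).
Proof.
move=> p0 p1 y0.
have q0 : 0 < 1 - p by rewrite subr_gt0.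
have pq : p^-1^-1 + (1 - p)^-1^-1 = 1 by rewrite !invrK addrC subrK.
have := @conjugate_powR R (y `^ p) 1 p^-1 (1 - p)^-1 (powR_ge0 _ _) ler01.
move=> /(_ _ _ pq); rewrite !invr_gt0 p0 q0 => /(_ isT isT).
rewrite mulr1 -powRrM mulfV ?gt_eqF // powRr1 // powR1 !invrK /=.
lra.
Qed.

Lemma rpow_ge0 (R : realType) (x p : R) : 0 <= rpow x p.
Proof. by rewrite /rpow; case: ifP => // _; exact: powR_ge0. Qed.

Lemma rpow_le (R : realType) (x y p : R) : 0 <= p -> 0 <= x -> x <= y ->
  rpow x p <= rpow y p.
Proof.
move=> p0 x0 xy; case: (eqVneq x 0) => [->|x_ne0].
  by rewrite {1}/rpow eqxx; exact: rpow_ge0.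
rewrite /rpow (negbTE x_ne0).
have y_ne0 : y != 0 by apply: lt0r_neq0; apply: lt_le_trans xy; rewrite lt0r x_ne0.
rewrite (negbTE y_ne0); apply: ge0_ler_powR => //; rewrite ?nnegrE //.
exact: le_trans xy.
Qed.

Lemma fp_ge0 (R : realType) (V : finType) (e : rel V) (p : R) (S : {set V}) :
  0 <= fp e p S.
Proof.
rewrite /fp; case: ifP => // _; apply: mulr_ge0; first by rewrite invr_ge0.
by apply: sumr_ge0 => v _; exact: rpow_ge0.
Qed.

Lemma rpow_tangent (R : realType) (p : R) (d c : nat) : 0 < p -> p < 1 ->
  (0 < c)%N ->
  rpow (d%:R) p <= rpow (c%:R) p * (p * (d%:R / c%:R) + (1 - p)).
Proof.
move=> p0 p1 c0.
have cR : (0 : R) < c%:R by rewrite ltr0n.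
rewrite /rpow (gt_eqF cR).
have Fp : 0 < (c%:R : R) `^ p by rewrite powR_gt0.
case: ifP => [_|_].
  apply: mulr_ge0; first exact: ltW.
  have : 0 <= (d%:R : R) / c%:R by rewrite divr_ge0 // ltW.
  move=> h; have : 0 <= p * (d%:R / c%:R) by rewrite mulr_ge0 // ltW.
  lra.
have dc0 : (0 : R) <= d%:R / c%:R by rewrite divr_ge0 // ltW.
rewrite [X in X `^ p <= _](_ : (d%:R : R) = c%:R * (d%:R / c%:R)); last first.
  by rewrite mulrC divfK // gt_eqF.
rewrite powRM ?(ltW cR) //.
rewrite ler_pM2l //; exact: young_p.
Qed.
Lemma deg_sum (V : finType) (e : rel V) (S : {set V}) v :
  deg e S v = (\sum_(u in S) e u v)%N.
Proof.
rewrite /deg -sum1_card big_mkcond [RHS]big_mkcond /=.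
by apply: eq_bigr => u _; rewrite inE; case: (u \in S); case: (e u v).
Qed.

Section Peel.
Variables (V : finType) (e : rel V) (S : nat -> {set V}) (l : nat -> V).
Hypothesis HS : peeling e S l.

Lemma peel_card j : (j <= #|V|)%N -> #|S j| = (#|V| - j)%N.
Proof.
case: HS => S0 Hst; elim: j => [|j IH] hj; first by rewrite S0 cardsT subn0.
have [lin _ ->] := Hst j.+1 (hj).
have := cardsD1 (l j.+1) (S j); rewrite /= lin IH ?(ltnW hj) //.
by move=> Hc; rewrite add1n in Hc; rewrite subnS Hc.
Qed.

Lemma peel_last : S #|V| = finset.set0.
Proof. by apply: cards0_eq; rewrite peel_card // subnn. Qed.

Lemma peel_time : exists r : V -> nat, forall u,
  [/\ (0 < r u <= #|V|)%N, (forall j, (j < r u)%N -> u \in S j) & l (r u) = u].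
Proof.
have exP : forall u, exists j, u \notin S j.
  by move=> u; exists #|V|; rewrite peel_last inE.
exists (fun u => ex_minn (exP u)) => u.
case: ex_minnP => m Hm Hmin.
case: HS => S0 Hst.
have m0 : (0 < m)%N by case: m Hm {Hmin} => //; rewrite S0 inE.
have mn : (m <= #|V|)%N by apply: Hmin; rewrite peel_last inE.
have Hlt : forall j, (j < m)%N -> u \in S j.
  move=> j jm; apply/negPn/negP => /Hmin; rewrite leqNgt jm //.
split => //; first by rewrite m0.
have [_ _ Sm] := Hst m (ltac:(by rewrite m0)).
have : u \in S m.-1 by apply: Hlt; rewrite prednK ?leqnn // ltnSn.
move: Hm; rewrite Sm !inE negb_and negbK => /orP [/eqP -> //|]; by move=> /negP.
Qed.

Lemma sum_deg_bound (e_sym : symmetric e) (r : V -> nat)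
  (Hr : forall u, [/\ (0 < r u <= #|V|)%N, (forall j, (j < r u)%N -> u \in S j)
        & l (r u) = u]) (T : {set V}) :
  (\sum_(v in T) deg e T v <= 2 * \sum_(v in T) deg e (S (r v).-1) v)%N.
Proof.
under eq_bigr => v _ do rewrite deg_sum.
set A := (\sum_(v in T) \sum_(u in T) (e u v && (r v <= r u)%N))%N.
have H1 : (\sum_(v in T) \sum_(u in T) e u v <=
   A + \sum_(v in T) \sum_(u in T) (e u v && (r u <= r v)%N))%N.
  rewrite /A -big_split /=; apply: leq_sum => v _.
  rewrite -big_split /=; apply: leq_sum => u _.
  have := leq_total (r v) (r u).
  by case: (r v <= r u)%N; case: (r u <= r v)%N; case: (e u v).
have H2 : (\sum_(v in T) \sum_(u in T) (e u v && (r u <= r v)%N))%N = A.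
  rewrite exchange_big /=; apply: eq_bigr => u _; apply: eq_bigr => v _.
  by rewrite e_sym.
have H3 : (A <= \sum_(v in T) deg e (S (r v).-1) v)%N.
  apply: leq_sum => v _; rewrite deg_sum big_mkcond [X in (_ <= X)%N]big_mkcond.
  apply: leq_sum => u _ /=.
  case H: (r v <= r u)%N; last by rewrite andbF; case: ifP.
  have [/andP [rv0 _] _ _] := Hr v.
  have [_ Hu _] := Hr u.
  have uS : u \in S (r v).-1 by apply: Hu; move: rv0 H; lia.
  rewrite uS andbT; case: ifP => // _; exact: leqnn.
rewrite H2 in H1; apply: leq_trans H1 _; lia.
Qed.

End Peel.

Theorem lemma5 (R : realType) (V : finType) (e : rel V)
  (e_sym : symmetric e) (e_irr : irreflexive e)
  (p : R) (p_gt0 : 0 < p) (p_lt1 : p < 1)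
  (S : nat -> {set V}) (l : nat -> V) (HS : peeling e S l)
  (k : nat) (hk : (k <= #|V|)%N)
  (hmax : forall j : nat, (j <= #|V|)%N -> fp e p (S j) <= fp e p (S k)) :
  (forall T : {set V}, fp e p T <= 2 * fp e p (S k)) /\
  (forall T : {set V}, Mp e p T <= 2 `^ p^-1 * Mp e p (S k)).
Proof.
have [r Hr] := @peel_time _ _ _ _ HS.
have Fpart : forall T, fp e p T <= 2 * fp e p (S k).
  move=> T; rewrite {1}/fp; case: ifP => [_|/negbT Tne].
    by rewrite mulr_ge0 // fp_ge0.
  have [v0 v0T] := set0Pn _ Tne.
  pose D := fun v => deg e (S (r v).-1) v.
  pose vm := [arg max_(v > v0 in T) D v].
  have [vmT Dmax] : vm \in T /\ forall v, v \in T -> (D v <= D vm)%N.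
    by rewrite /vm; case: arg_maxnP.
  pose c := D vm.
  pose F := rpow (c%:R : R) p.
  have F0 : 0 <= F by apply: rpow_ge0.
  have HF : F <= fp e p (S k).
    have [/andP [r0 rn] Hin lr] := Hr vm.
    apply: le_trans (hmax (r vm).-1 _); last by move: rn; lia.
    pose S' := S (r vm).-1.
    have vmS : vm \in S' by apply: Hin; lia.
    rewrite /fp; have -> : (S' == finset.set0) = false.
      by apply/negbTE/set0Pn; exists vm.
    have Hmin : forall u, u \in S' -> (c <= deg e S' u)%N.
      move=> u uS; case: HS => _ Hst.
      have [_ Hm _] := Hst (r vm) (ltac:(by rewrite r0 rn)).
      by move: (Hm u uS); rewrite lr.
    have cS : (0 < #|S'|)%N by rewrite card_gt0; apply/set0Pn; exists vm.
    apply: (@le_trans _ _ (#|S'|%:R^-1 * \sum_(u in S') F)).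
      rewrite sumr_const -(mulr_natr F) mulrCA mulVf ?mulr1 //.
      by rewrite pnatr_eq0 -lt0n.
    apply: ler_wpM2l; first by rewrite invr_ge0.
    apply: ler_sum => u uS; apply: rpow_le; first exact: ltW.
      exact: ler0n.
    by rewrite ler_nat; exact: Hmin.
  have Hsum : (\sum_(v in T) deg e T v <= 2 * (#|T| * c))%N.
    have HH := @sum_deg_bound _ _ _ _ e_sym r Hr T.
    apply: (leq_trans HH).
    rewrite leq_mul2l; apply/orP; right.
    rewrite -sum_nat_const; apply: leq_sum => v vT; exact: Dmax.
  have tpos : (0 < #|T|)%N by rewrite card_gt0.
  have tR : (0 : R) < #|T|%:R by rewrite ltr0n.
  case: (posnP c) => [c0 | cpos].
    rewrite big1 ?mulr0 ?mulr_ge0 ?fp_ge0 // => v vT.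
    have : deg e T v = 0%N.
      move: Hsum; rewrite c0 muln0 (bigD1 v vT) /=; lia.
    by move=> ->; rewrite /rpow eqxx.
  have cR : (0 : R) < c%:R by rewrite ltr0n.
  have H1 : \sum_(v in T) rpow (deg e T v)%:R p <=
     \sum_(v in T) F * (p * ((deg e T v)%:R / c%:R) + (1 - p)).
    by apply: ler_sum => v _; apply: rpow_tangent.
  rewrite -mulr_sumr big_split /= -mulr_sumr -mulr_suml sumr_const in H1.
  rewrite -natr_sum in H1.
  set X := (\sum_(v in T) deg e T v)%N in H1 Hsum.
  have y_le : (X%:R : R) / c%:R <= 2 * #|T|%:R.
    rewrite ler_pdivrMr // -natrM -natrM ler_nat.
    by rewrite -mulnA.
  have y0 : (0 : R) <= X%:R / c%:R by rewrite divr_ge0 // ltW.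
  set y := X%:R / c%:R in H1 y_le y0.
  have H2 : p * y + (1 - p) *+ #|T| <= 2 * #|T|%:R.
    rewrite -mulr_natr.
    have : p * y <= p * (2 * #|T|%:R) by rewrite ler_wpM2l // ltW.
    have : 0 <= (1 - p) * #|T|%:R by rewrite mulr_ge0 // ?subr_ge0 ltW.
    lra.
  apply: le_trans (ler_wpM2l _ H1) _; first by rewrite invr_ge0 ltW.
  apply: le_trans (ler_wpM2l _ (ler_wpM2l F0 H2)) _; first by rewrite invr_ge0 ltW.
  have -> : #|T|%:R^-1 * (F * (2 * #|T|%:R)) = 2 * F.
    by field; rewrite gt_eqF.
  have := HF; lra.
split => // T.
rewrite /Mp; case: (eqVneq (fp e p T) 0) => [->|fT0].
  by rewrite {1}/rpow eqxx mulr_ge0 ?powR_ge0 ?rpow_ge0.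
have fT : 0 < fp e p T by rewrite lt0r fT0 fp_ge0.
have fS : 0 < fp e p (S k) by have := Fpart T; lra.
rewrite /rpow (negbTE fT0) gt_eqF // -powRM ?fp_ge0 //.
apply: ge0_ler_powR; rewrite ?nnegrE ?fp_ge0 ?mulr_ge0 ?fp_ge0 //.
  by rewrite invr_ge0 ltW.
Qed.
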